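(* Let $G$ be the path graph on $n$ vertices $v_1,\dots,v_n$ (with $v_t$ adjacent to $v_{t+1}$ for $1\le t<n$; the linear nearest-neighbor architecture). The quantum hashing circuit produced by the construction in the context on $n$ qubits has CNOT cost $3n-5$ for one application and $3n\ell-7\ell+2$ for $\ell$ applications with the path strategy.
   Context: Each vertex carries one physical qubit; two-qubit gates only act on qubits at adjacent vertices. The shortest walk visiting all vertices used is $P=(v_1,\dots,v_n)$. $CR_y(\xi)=\mathrm{diag}(I,R_y(\xi))$; SWAP exchanges two qubits. Single application along a walk $(x_1,\dots,x_k)$: target starts on $x_2$; $U=\emptyset$; apply $CR_y$ (control $x_1$, target $x_2$), add $x_1$ to $U$, $j=2$; loop: if $x_{j+1}\notin U$ apply $CR_y$ (control $x_{j+1}$, target $x_j$) and add $x_{j+1}$ to $U$; if $j=k-1$ stop; else if $x_{j+2}=x_j$ set $j\leftarrow j+2$, otherwise apply SWAP to $x_j,x_{j+1}$ and set $j\leftarrow j+1$; repeat. Path strategy for $\ell$ applications: applications alternately use $P$ and its reversal; the last $CR_y$ of one application and the first $CR_y$ of the next act on the same pair and are merged into one $CR_y$. CNOT cost: each $CR_y$ counts 2, each SWAP 3, a $CR_y$ immediately followed by a SWAP on the same two qubits 3 in total, single-qubit gates 0. *)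

(* Defs.v *)
From mathcomp Require Import all_boot.
Set Implicit Arguments. Unset Strict Implicit. Unset Printing Implicit Defensive.

(* Gates of the circuit. Vertices (= physical qubits) are natural numbers.
   The rotation angle of CR_y is irrelevant for the CNOT cost and is omitted. *)
Inductive gate : Type :=
| CRy (c t : nat)
| SWAP (a b : nat).

Definition same_pair (a b c d : nat) : bool :=
  ((a == c) && (b == d)) || ((a == d) && (b == c)).

(* CNOT cost: CR_y = 2, SWAP = 3, a CR_y immediately followed by a SWAP on
   the same two qubits = 3 in total, single-qubit gates = 0. *)
Fixpoint cnot_cost (s : seq gate) : nat :=
  match s with
  | [::] => 0
  | CRy a b :: ((SWAP c d :: s'') as s') =>
      if same_pair a b c d then 3 + cnot_cost s'' else 2 + cnot_cost s'
  | CRy _ _ :: s' => 2 + cnot_cost s'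
  | SWAP _ _ :: s' => 3 + cnot_cost s'
  end.

(* x_i for 1-indexed i in the walk x = (x_1,...,x_k). *)
Definition wx (x : seq nat) (i : nat) : nat := nth 0 x i.-1.

(* The loop of a single application, with fuel; j is the current index,
   U the set of vertices already used as controls. *)
Fixpoint app_loop (fuel : nat) (x : seq nat) (j : nat) (U : seq nat)
  : seq gate :=
  match fuel with
  | 0 => [::]
  | fuel'.+1 =>
      let k := size x in
      let xj := wx x j in
      let xj1 := wx x j.+1 in
      let g1 := if xj1 \notin U then [:: CRy xj1 xj] else [::] in
      let U' := if xj1 \notin U then xj1 :: U else U in
      if j == k.-1 then g1
      else if wx x j.+2 == xj then g1 ++ app_loop fuel' x j.+2 U'
      else g1 ++ SWAP xj xj1 :: app_loop fuel' x j.+1 U'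
  end.

(* The loop runs at most k times (j strictly increases). *)
Definition single_app (x : seq nat) : seq gate :=
  CRy (wx x 1) (wx x 2) :: app_loop (size x) x 2 [:: wx x 1].

Definition merge_apps (s t : seq gate) : seq gate :=
  match t with
  | CRy a b :: t' =>
      match last (SWAP 0 0) s with
      | CRy c d => if same_pair a b c d then s ++ t' else s ++ t
      | _ => s ++ t
      end
  | _ => s ++ t
  end.

Definition path_strategy (P : seq nat) (l : nat) : seq gate :=
  foldl (fun acc i => merge_apps acc (single_app (if odd i then rev P else P)))
        [::] (iota 0 l).

Definition path_vertex (n v : nat) : bool := (1 <= v <= n).
Definition path_adj (n u v : nat) : bool :=
  [&& path_vertex n u, path_vertex n v & ((u.+1 == v) || (v.+1 == u))].

Definition covering_walk (n : nat) (W : seq nat) : bool :=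
  [&& W != [::], all (path_vertex n) W,
      path (path_adj n) (head 0 W) (behead W)
    & all (fun v => v \in W) (iota 1 n)].

Definition shortest_covering_walk (n : nat) (P : seq nat) : Prop :=
  covering_walk n P /\ forall W, covering_walk n W -> size P <= size W.

(* Main.v *)
Require Import Defs.
From mathcomp Require Import all_boot.
From mathcomp Require Import zify.

Definition noswap (t : seq gate) := forall a b t', t <> SWAP a b :: t'.

Lemma cc_CC a b c d s : cnot_cost (CRy a b :: CRy c d :: s) = 2 + cnot_cost (CRy c d :: s).
Proof. by []. Qed.
Lemma cc_CS a b c d s : cnot_cost (CRy a b :: SWAP c d :: s) =
  if same_pair a b c d then 3 + cnot_cost s else 2 + cnot_cost (SWAP c d :: s).
Proof. by []. Qed.
Lemma cc_S a b s : cnot_cost (SWAP a b :: s) = 3 + cnot_cost s.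
Proof. by []. Qed.

Lemma cost_cat s t : noswap t -> cnot_cost (s ++ t) = cnot_cost s + cnot_cost t.
Proof.
move=> Ht; have [m Hm] := ubnP (size s); elim: m s Hm => // m IH [|g s] // Hs.
rewrite cat_cons.
case: g Hs => [a b|a b] Hs; last by rewrite !cc_S IH ?addnA.
case: s Hs => [|g s] Hs.
  case E: t => [|[c d|c d] t'] //.
  by case: (Ht c d t').
rewrite cat_cons.
case: g Hs => [c d|c d] Hs.
  by rewrite !cc_CC -cat_cons IH // addnA.
rewrite !cc_CS; case: (same_pair a b c d).
  by rewrite IH ?addnA //=; move: Hs => /=; lia.
by rewrite -cat_cons IH // addnA.
Qed.

Lemma loop_spec (x : seq nat) (fuel j : nat) (U : seq nat) :
  uniq x -> 2 <= j -> j < size x -> size x <= fuel + j ->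
  {in U, forall u, index u x < j} ->
  exists r, app_loop fuel x j U = CRy (wx x j.+1) (wx x j) :: r /\
    cnot_cost (app_loop fuel x j U) = 3 * (size x - 1 - j) + 2 /\
    forall y, last y (app_loop fuel x j U) = CRy (wx x (size x)) (wx x (size x).-1).
Proof.
move=> ux; elim: fuel j U => [|f IH] j U j2 jk kf HU; first by lia.
rewrite /=.
have Hn : wx x j.+1 \notin U.
  apply/negP => /HU; rewrite /wx /= index_uniq //; lia.
rewrite Hn.
case: eqP => Hj.
  exists [::]; split => //; split; first by rewrite /=; lia.
  move=> y /=. have -> : size x = j.+1 by lia. by [].
have Hj' : j.+1 < size x.
  by rewrite ltn_neqAle jk andbT; apply/eqP => E; apply: Hj; rewrite -E.
have -> : (wx x j.+2 == wx x j) = false.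
  rewrite /wx /= nth_uniq //; [apply/negbTE/eqP; lia | exact: leq_ltn_trans (leq_pred j) jk].
have kf' : size x <= f + j.+1 by rewrite addnS.
have j2' : 1 < j.+1 by apply: ltnW.
have HU' : {in wx x j.+1 :: U, forall u, index u x < j.+1}.
  move=> u; rewrite inE => /orP [/eqP ->|/HU].
    by rewrite /wx /= index_uniq.
  move=> h; exact: ltnW.
have [r [E1 [E2 E3]]] := IH j.+1 (wx x j.+1 :: U) j2' Hj' kf' HU'.
exists (SWAP (wx x j) (wx x j.+1) :: app_loop f x j.+1 (wx x j.+1 :: U)); split => //.
split.
  rewrite /= /same_pair !eqxx orbT E2. lia.
move=> y; rewrite /= E1 /=. by rewrite -(E3 y) E1.
Qed.

Lemma app_spec (x : seq nat) : uniq x -> 3 <= size x ->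
  exists t', single_app x = CRy (wx x 1) (wx x 2) :: t' /\ noswap t' /\
   cnot_cost t' = 3 * size x - 7 /\ cnot_cost (single_app x) = 3 * size x - 5 /\
   forall y, last y t' = CRy (wx x (size x)) (wx x (size x).-1).
Proof.
move=> ux k3.
have HU : {in [:: wx x 1], forall u, index u x < 2}.
  move=> u; rewrite inE => /eqP ->; rewrite /wx /= index_uniq //; by apply: (leq_trans _ k3).
have [r [E1 [E2 E3]]] := loop_spec x (size x) 2 [:: wx x 1] ux (leqnn 2) k3 (leq_addr _ _) HU.
exists (app_loop (size x) x 2 [:: wx x 1]); split => //; split.
  by rewrite E1.
split; first by rewrite E2; lia.
split; last by [].
rewrite /single_app E1 cc_CC -E1 E2; lia.
Qed.

Lemma wx_rev (y : seq nat) : 2 <= size y ->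
  wx (rev y) 1 = wx y (size y) /\ wx (rev y) 2 = wx y (size y).-1.
Proof.
move=> h; rewrite /wx /= !nth_rev //; last by lia.
split; congr nth; lia.
Qed.

Lemma path_iota n m k : 1 <= m -> m + k <= n -> path (path_adj n) m (iota m.+1 k).
Proof.
elim: k m => [|k IH] m h1 h2 //=.
apply/andP; split.
  rewrite /path_adj /path_vertex eqxx orTb andbT; apply/andP; split; lia.
apply: IH; lia.
Qed.

Lemma walk_facts n P : 3 <= n -> shortest_covering_walk n P -> uniq P /\ size P = n.
Proof.
move=> n3 [cw Hmin].
have cwi : covering_walk n (iota 1 n).
  apply/and4P; split.
  - by rewrite -size_eq0 size_iota; apply/eqP; lia.
  - apply/allP => v; rewrite mem_iota /path_vertex; lia.
  - rewrite (_ : iota 1 n = 1 :: iota 2 n.-1); last by case: (n) n3.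
    apply: path_iota => /=; lia.
  - by apply/allP.
have h1 := Hmin _ cwi; rewrite size_iota in h1.
case/and4P: cw => _ _ _ /allP Hall.
have sub : {subset iota 1 n <= P} by move=> v /Hall.
have h2 := uniq_leq_size (iota_uniq 1 n) sub; rewrite size_iota in h2.
split; last by apply/eqP; rewrite eqn_leq h1 h2.
by apply: leq_size_uniq (iota_uniq 1 n) sub _; rewrite size_iota.
Qed.

Lemma strat_spec n (P : seq nat) m : uniq P -> size P = n -> 3 <= n ->
  let Q i := if odd i then rev P else P in
  cnot_cost (path_strategy P m.+1) + 2 * m = m.+1 * (3 * n - 5) /\
  forall y, last y (path_strategy P m.+1) = CRy (wx (Q m) n) (wx (Q m) n.-1).
Proof.
move=> uP sP n3 Q.
have uQ i : uniq (Q i) by rewrite /Q; case: odd; rewrite ?rev_uniq.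
have sQ i : size (Q i) = n by rewrite /Q; case: odd; rewrite ?size_rev.
have QS i : Q i.+1 = rev (Q i) by rewrite /Q /=; case: odd; rewrite ?revK.
rewrite /path_strategy.
elim: m => [|m [IH1 IH2]].
  have [t' [E1 [Hns [E2 [E3 E4]]]]] := app_spec (Q 0) (uQ 0) ltac:(rewrite sQ; lia).
  rewrite (_ : foldl _ [::] (iota 0 1) = single_app (Q 0)); last first.
    by rewrite /= /merge_apps E1.
  rewrite E3 sQ; split; first lia.
  by move=> y; rewrite E1 /= E4 sQ.
have [t' [E1 [Hns [E2 [E3 E4]]]]] := app_spec (Q m.+1) (uQ m.+1) ltac:(rewrite sQ; lia).
rewrite -addn1 iotaD foldl_cat.
set F := foldl _ _ (iota 0 m.+1) in IH1 IH2 *.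
rewrite (_ : foldl _ F (iota (0 + m.+1) 1) = merge_apps F (single_app (Q m.+1))) //.
rewrite E1 /merge_apps.
rewrite (IH2 (SWAP 0 0)).
have [W1 W2] := wx_rev (Q m) ltac:(rewrite sQ; lia).
rewrite QS W1 W2 sQ /same_pair !eqxx /=.
split.
  rewrite cost_cat // E2 sQ. lia.
move=> y; rewrite last_cat.
rewrite -QS -(sQ m.+1); exact: E4.
Qed.

Theorem lemma5 (n l : nat) (P : seq nat) :
  3 <= n -> 1 <= l -> shortest_covering_walk n P ->
  cnot_cost (single_app P) = 3 * n - 5 /\
  cnot_cost (path_strategy P l) = 3 * n * l - 7 * l + 2.
Proof.
move=> n3 l1 sw.
have [uP sP] := walk_facts n P n3 sw.
have [t' [_ [_ [_ [E3 _]]]]] := app_spec (P) uP ltac:(rewrite sP; lia).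
split; first by rewrite E3 sP.
case: l l1 => // m _.
have [h _] := strat_spec n P m uP sP n3.
move: h; nia.
Qed.
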